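(* Let $R\in\mathrm{SO}(3)$ and let $q_s',q_s''\in\mathbb R^3$ for $s\in\{i,j,k\}$. Let $G_{ijk}$ be the $3\times3$ matrix whose rows are $(Rq_i'\times q_i'')^\top$, $(Rq_j'\times q_j'')^\top$, $(Rq_k'\times q_k'')^\top$, and let $M_{ijk}$ be the $6\times 6$ matrix $$M_{ijk}=\begin{bmatrix} q_i'' & -Rq_i' & -q_j'' & Rq_j' & 0 & 0\\ q_i'' & -Rq_i' & 0 & 0 & -q_k'' & Rq_k'\end{bmatrix}$$ (each entry a $3\times1$ block), which is the coefficient matrix of the linear system in $(\lambda_i,\mu_i,\lambda_j,\mu_j,\lambda_k,\mu_k)$ obtained from the equations $\lambda_s q_s''=\mu_s Rq_s'+t$ ($s=i,j,k$) by subtracting the $j$-th and $k$-th equations from the $i$-th. Then $\det G_{ijk}=\pm\det M_{ijk}$.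
   Context: $q_s'$ and $q_s''$ are the (homogeneous) image coordinates of the $s$-th point correspondence in the first and second calibrated camera, and $R$ is the relative rotation. The epipolar constraint $q_s''^\top[t]_\times R q_s'=0$ is linear in $t$ and can be written as $(Rq_s'\times q_s'')^\top t=0$ up to sign; $G_{ijk}$ collects these rows for three correspondences. Here $[a]_\times$ denotes the skew-symmetric matrix with $[a]_\times b=a\times b$. *)

(* Defs.v *)
From HB Require Import structures.
From mathcomp Require Import all_boot all_order all_algebra.
Set Implicit Arguments. Unset Strict Implicit. Unset Printing Implicit Defensive.
Import Order.TTheory GRing.Theory Num.Theory.
Local Open Scope ring_scope.

Definition cross (F : comNzRingType) (a b : 'cV[F]_3) : 'cV[F]_3 :=
  \col_(i < 3)
    (if i == 0 :> nat then a 1 0 * b 2%:R 0 - a 2%:R 0 * b 1 0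
     else if i == 1 :> nat then a 2%:R 0 * b 0 0 - a 0 0 * b 2%:R 0
     else a 0 0 * b 1 0 - a 1 0 * b 0 0).

Definition is_SO3 (F : comNzRingType) (Rm : 'M[F]_3) : Prop :=
  Rm^T *m Rm = 1%:M /\ \det Rm = 1.

Definition Gmat (F : comNzRingType) (Rm : 'M[F]_3)
  (qi' qi'' qj' qj'' qk' qk'' : 'cV[F]_3) : 'M[F]_3 :=
  col_mx (cross (Rm *m qi') qi'')^T
    (col_mx (cross (Rm *m qj') qj'')^T (cross (Rm *m qk') qk'')^T).

Definition Mmat (F : comNzRingType) (Rm : 'M[F]_3)
  (qi' qi'' qj' qj'' qk' qk'' : 'cV[F]_3) : 'M[F]_6 :=
  col_mx
    (row_mx qi'' (row_mx (- (Rm *m qi')) (row_mx (- qj'') (row_mx (Rm *m qj')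
       (row_mx (0 : 'cV[F]_3) (0 : 'cV[F]_3))))))
    (row_mx qi'' (row_mx (- (Rm *m qi')) (row_mx (0 : 'cV[F]_3) (row_mx (0 : 'cV[F]_3)
       (row_mx (- qk'') (Rm *m qk')))))).

(* Main.v *)
Require Import Defs.
From HB Require Import structures.
From mathcomp Require Import all_boot all_order all_algebra.
Import Order.TTheory GRing.Theory Num.Theory.
Local Open Scope ring_scope.
From mathcomp Require Import ring zify.

Section DetL.
Variable F : comNzRingType.
Definition mxl (n:nat) (L : seq (seq F)) : 'M[F]_n := \matrix_(i<n, j<n) nth 0 (nth [::] L i) j.
Fixpoint sumf (k:nat) (f : nat -> F) : F := if k is k'.+1 then sumf k' f + f k' else 0.
Definition rmj (j:nat) (s : seq F) := take j s ++ drop j.+1 s.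
Fixpoint detl (n:nat) (L: seq (seq F)) : F :=
  if n is n'.+1 then sumf n (fun j => (-1)^+j * nth 0 (head [::] L) j * detl n' (map (rmj j) (behead L))) else 1.

Lemma sumfE k (f : nat -> F) : \sum_(j < k) f j = sumf k f.
Proof. elim: k => [|k IH]; first by rewrite big_ord0. by rewrite big_ord_recr /= IH. Qed.

Lemma nth_rmj j s l : nth 0 (rmj j s) l = nth 0 s (bump j l).
Proof.
rewrite /rmj /bump; have [hj|hj] := ltnP j (size s).
  rewrite nth_cat size_take hj.
  case: (ltnP l j) => hlj.
    by rewrite add0n nth_take.
  rewrite add1n nth_drop; congr nth; rewrite addSn subnKC //.
rewrite take_oversize // drop_oversize ?cats0; last lia.
case: (ltnP l j) => hlj; first by rewrite add0n.
rewrite add1n !nth_default //; [exact: leq_trans hj (leq_trans hlj (leqnSn _))|exact: leq_trans hj hlj].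
Qed.

Lemma detlE n L : \det (mxl n L) = detl n L.
Proof.
elim: n L => [|n IH] L; first by rewrite det_mx00.
have E (j : 'I_n.+1) : mxl n.+1 L ord0 j * cofactor (mxl n.+1 L) ord0 j =
   (-1) ^+ j * (head [::] L)`_j * detl n [seq rmj j i | i <- behead L].
  rewrite /cofactor mxE nth0 add0n -IH -mulrA mulrCA; congr (_ * (_ * _)).
  congr (\det _); apply/matrixP => k l; rewrite !mxE /= {1}/bump leq0n add1n.
  have [lt|ge] := ltnP k (size (behead L)).
    by rewrite (nth_map [::]) // nth_rmj nth_behead.
  rewrite [nth [::] (map _ _) k]nth_default ?size_map //.
  rewrite [nth [::] L _]nth_default ?nth_nil //.
  by move: ge; rewrite size_behead; case: (size L).
rewrite (expand_det_row _ ord0) big_ord_recr /= -sumfE E; congr (_ + _).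
by apply: eq_bigr => j _; rewrite E.
Qed.
End DetL.
Arguments mxl {F}.
Arguments detl {F}.

Lemma col_mxE' (F : comNzRingType) m1 m2 n (A : 'M[F]_(m1.+1, n)) (B : 'M[F]_(m2.+1, n)) i j :
  col_mx A B i j = if (i < m1.+1)%N then A (inord i) j else B (inord (i - m1.+1)) j.
Proof.
case: splitP => k Hk.
  have -> : i = lshift _ k by apply/val_inj.
  by rewrite col_mxEu inord_val.
have -> : i = rshift _ k by apply/val_inj.
by rewrite col_mxEd /= addKn inord_val.
Qed.

Lemma row_mxE' (F : comNzRingType) m n1 n2 (A : 'M[F]_(m, n1.+1)) (B : 'M[F]_(m, n2.+1)) i j :
  row_mx A B i j = if (j < n1.+1)%N then A i (inord j) else B i (inord (j - n1.+1)).
Proof.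
case: splitP => k Hk.
  have -> : j = lshift _ k by apply/val_inj.
  by rewrite row_mxEl inord_val.
have -> : j = rshift _ k by apply/val_inj.
by rewrite row_mxEr /= addKn inord_val.
Qed.

Definition v3 (F : comNzRingType) (x y z : F) : 'cV[F]_3 := \col_(i<3) nth 0 [:: x; y; z] i.
Arguments v3 {F}.

Lemma v3E {F : comNzRingType} (v : 'cV[F]_3) :
  v = v3 (v ord0 ord0) (v (inord 1) ord0) (v (inord 2) ord0).
Proof.
apply/matrixP => i j; rewrite !mxE ord1.
case: i => [[|[|[|//]]] Hi] /=; congr (v _ _); apply/val_inj; by rewrite /= ?inordK.
Qed.

Ltac ordcases6 i := case: i => [[|[|[|[|[|[|//]]]]]] ?].
Ltac ordcases3 i := case: i => [[|[|[|//]]] ?].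

Lemma core (F : comNzRingType) (a0 a1 a2 b0 b1 b2 c0 c1 c2 d0 d1 d2 e0 e1 e2 f0 f1 f2 : F) :
  let ai := v3 a0 a1 a2 in let bi := v3 b0 b1 b2 in
  let aj := v3 c0 c1 c2 in let bj := v3 d0 d1 d2 in
  let ak := v3 e0 e1 e2 in let bk := v3 f0 f1 f2 in
  \det (col_mx (cross ai bi)^T (col_mx (cross aj bj)^T (cross ak bk)^T)) =
  \det (col_mx
    (row_mx bi (row_mx (- ai) (row_mx (- bj) (row_mx aj
       (row_mx (0 : 'cV[F]_3) (0 : 'cV[F]_3))))))
    (row_mx bi (row_mx (- ai) (row_mx (0 : 'cV[F]_3) (row_mx (0 : 'cV[F]_3)
       (row_mx (- bk) ak)))))).
Proof.
move=> ai bi aj bj ak bk.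
have -> : col_mx (cross ai bi)^T (col_mx (cross aj bj)^T (cross ak bk)^T) =
  mxl 3 [:: [:: a1*b2 - a2*b1; a2*b0 - a0*b2; a0*b1 - a1*b0];
            [:: c1*d2 - c2*d1; c2*d0 - c0*d2; c0*d1 - c1*d0];
            [:: e1*f2 - e2*f1; e2*f0 - e0*f2; e0*f1 - e1*f0]].
  apply/matrixP => i j; ordcases3 i; ordcases3 j;
  do 4 (rewrite ?(@col_mxE' F 0 1 3, @col_mxE' F 0 0 3) /= ?inordK //=).
  all: rewrite ?mxE /= ?inordK //=.
rewrite detlE.
have -> : col_mx
    (row_mx bi (row_mx (- ai) (row_mx (- bj) (row_mx aj
       (row_mx (0 : 'cV[F]_3) (0 : 'cV[F]_3))))))
    (row_mx bi (row_mx (- ai) (row_mx (0 : 'cV[F]_3) (row_mx (0 : 'cV[F]_3)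
       (row_mx (- bk) ak))))) =
  mxl 6 [:: [:: b0; -a0; -d0; c0; 0; 0];
            [:: b1; -a1; -d1; c1; 0; 0];
            [:: b2; -a2; -d2; c2; 0; 0];
            [:: b0; -a0; 0; 0; -f0; e0];
            [:: b1; -a1; 0; 0; -f1; e1];
            [:: b2; -a2; 0; 0; -f2; e2]].
  apply/matrixP => i j; ordcases6 i; ordcases6 j;
  do 7 (rewrite ?(@col_mxE' F 2 2 6, @row_mxE' F 3 0 4, @row_mxE' F 3 0 3,
     @row_mxE' F 3 0 2, @row_mxE' F 3 0 1, @row_mxE' F 3 0 0) /= ?inordK //=).
  all: rewrite ?mxE /= ?inordK //=.
rewrite detlE /=.
clear ai bi aj bj ak bk. ring.
Qed.

Theorem theorem2 (F : realFieldType) (Rm : 'M[F]_3)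
  (qi' qi'' qj' qj'' qk' qk'' : 'cV[F]_3) :
  is_SO3 Rm ->
  \det (Gmat Rm qi' qi'' qj' qj'' qk' qk'') = \det (Mmat Rm qi' qi'' qj' qj'' qk' qk'') \/
  \det (Gmat Rm qi' qi'' qj' qj'' qk' qk'') = - \det (Mmat Rm qi' qi'' qj' qj'' qk' qk'').
Proof.
move=> _; rewrite /Gmat /Mmat.
move: (Rm *m qi') (Rm *m qj') (Rm *m qk') => ai aj ak.
rewrite (v3E ai) (v3E aj) (v3E ak) (v3E qi'') (v3E qj'') (v3E qk'').
left; exact: core.
Qed.
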